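(* For every positive integer $n$, the sets $\mathcal{GEN}_n^+\subset\mathcal{GEN}_n$ are dense $G_\delta$ subsets of $\mathcal G_0^n$.
   Context: $\mathcal G$ is the group of strictly increasing continuous maps $f:[-1,1]\to[-1,1]$ with $f(\pm1)=\pm1$, with the sup-norm topology; $i$ is the identity; $\mathcal G_0=\{f\in\mathcal G:\int_{-1}^1f=0\}$. $f^e(t)=\tfrac12(f(t)+f(-t))$; $Q(f,g)=\int_{-1}^1f(g^{-1}(t))\,dt$. $\mathcal{GEN}_n$ is the set of $(f_1,\dots,f_n)\in\mathcal G_0^n$ with $\{i,f_1,\dots,f_n\}$ linearly independent and $Q(f_i,f_j)\ne0$ for all $i\neq j$; $\mathcal{GEN}_n^+$ is the set of $(f_1,\dots,f_n)\in\mathcal G_0^n$ with $\{f_1^e,\dots,f_n^e\}$ linearly independent and $Q(f_i,f_j)\neq0$ for all $i\ne j$. *)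

(* Defs.v *)
From Stdlib Require Import Reals Lra ClassicalEpsilon.
From Coquelicot Require Import Coquelicot.
Open Scope R_scope.

(* A function on [-1,1] is represented by f : R -> R; only values on
   [-1,1] matter. An n-tuple (f_1,...,f_n) is F : nat -> (R -> R),
   with components F 0, ..., F (n-1). *)
Definition interval_11 (t : R) : Prop := -1 <= t <= 1.

Definition cont_on_11 (f : R -> R) : Prop :=
  forall x, interval_11 x -> forall eps, 0 < eps ->
    exists delta, 0 < delta /\
      forall y, interval_11 y -> Rabs (y - x) < delta -> Rabs (f y - f x) < eps.

Definition in_G (f : R -> R) : Prop :=
  (forall s t, interval_11 s -> interval_11 t -> s < t -> f s < f t) /\
  cont_on_11 f /\ f (-1) = -1 /\ f 1 = 1.

Definition in_G0 (f : R -> R) : Prop := in_G f /\ RInt f (-1) 1 = 0.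

Definition even_part (f : R -> R) : R -> R := fun t => (f t + f (- t)) / 2.

Definition ginv (g : R -> R) (t : R) : R :=
  epsilon (inhabits 0) (fun s => interval_11 s /\ g s = t).

Definition Q (f g : R -> R) : R := RInt (fun t => f (ginv g t)) (-1) 1.

Fixpoint lin_comb (n : nat) (c : nat -> R) (F : nat -> R -> R) (t : R) : R :=
  match n with
  | O => 0
  | S m => lin_comb m c F t + c m * F m t
  end.

Definition lin_indep_with_id (n : nat) (F : nat -> R -> R) : Prop :=
  forall (c0 : R) (c : nat -> R),
    (forall t, interval_11 t -> c0 * t + lin_comb n c F t = 0) ->
    c0 = 0 /\ forall i, (i < n)%nat -> c i = 0.

Definition lin_indep (n : nat) (F : nat -> R -> R) : Prop :=
  forall c : nat -> R,
    (forall t, interval_11 t -> lin_comb n c F t = 0) ->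
    forall i, (i < n)%nat -> c i = 0.

Definition in_G0n (n : nat) (F : nat -> R -> R) : Prop :=
  forall i, (i < n)%nat -> in_G0 (F i).

Definition Q_nonzero (n : nat) (F : nat -> R -> R) : Prop :=
  forall i j, (i < n)%nat -> (j < n)%nat -> i <> j -> Q (F i) (F j) <> 0.

Definition GEN (n : nat) (F : nat -> R -> R) : Prop :=
  in_G0n n F /\ lin_indep_with_id n F /\ Q_nonzero n F.

Definition GENplus (n : nat) (F : nat -> R -> R) : Prop :=
  in_G0n n F /\ lin_indep n (fun i => even_part (F i)) /\ Q_nonzero n F.

Definition sup_close (eps : R) (f g : R -> R) : Prop :=
  exists r, r < eps /\ forall t, interval_11 t -> Rabs (f t - g t) <= r.

(* ball of the product (max of sup-norms) metric on n-tuples *)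
Definition ball_n (n : nat) (eps : R) (F H : nat -> R -> R) : Prop :=
  forall i, (i < n)%nat -> sup_close eps (F i) (H i).

Definition open_in_G0n (n : nat) (U : (nat -> R -> R) -> Prop) : Prop :=
  forall F, U F -> in_G0n n F /\
    exists eps, 0 < eps /\ forall H, in_G0n n H -> ball_n n eps F H -> U H.

Definition Gdelta_in_G0n (n : nat) (S : (nat -> R -> R) -> Prop) : Prop :=
  exists U : nat -> (nat -> R -> R) -> Prop,
    (forall k, open_in_G0n n (U k)) /\
    forall F, S F <-> (in_G0n n F /\ forall k, U k F).

Definition dense_in_G0n (n : nat) (S : (nat -> R -> R) -> Prop) : Prop :=
  (forall F, S F -> in_G0n n F) /\
  forall F eps, in_G0n n F -> 0 < eps -> exists H, S H /\ ball_n n eps F H.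

(* Main.v *)
Require Import Defs.
From Stdlib Require Import Reals Lra Lia ClassicalEpsilon Classical.
From Coquelicot Require Import Coquelicot.
Open Scope R_scope.


Definition clamp (t : R) : R := Rmax (-1) (Rmin 1 t).

Lemma clamp_I t : interval_11 (clamp t).
Proof. unfold clamp, interval_11, Rmax, Rmin; repeat destruct Rle_dec; lra. Qed.

Lemma clamp_id t : interval_11 t -> clamp t = t.
Proof. unfold clamp, interval_11, Rmax, Rmin; repeat destruct Rle_dec; lra. Qed.

Lemma clamp_lip x y : Rabs (clamp y - clamp x) <= Rabs (y - x).
Proof.
  unfold clamp, Rmax, Rmin; repeat destruct Rle_dec; unfold Rabs;
  repeat destruct Rcase_abs; lra.
Qed.

Lemma cont_clamp f : cont_on_11 f -> forall x, continuity_pt (fun t => f (clamp t)) x.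
Proof.
  intros Hf x eps Heps.
  destruct (Hf (clamp x) (clamp_I x) eps Heps) as [d [Hd Hd']].
  exists d; split; [lra|].
  intros y [_ Hy]. simpl in *. unfold R_dist in *.
  apply Hd'. apply clamp_I. eapply Rle_lt_trans; [apply clamp_lip|]. exact Hy.
Qed.

Lemma cont_clamp' f : cont_on_11 f -> forall x, continuous (fun t => f (clamp t)) x.
Proof. intros Hf x. apply continuity_pt_filterlim. now apply cont_clamp. Qed.

Lemma exRI f a b : cont_on_11 f -> -1 <= a -> a <= 1 -> -1 <= b -> b <= 1 -> ex_RInt f a b.
Proof.
  intros Hf Ha1 Ha2 Hb1 Hb2.
  apply ex_RInt_ext with (f := fun t => f (clamp t)).
  - intros x Hx. rewrite clamp_id; auto. unfold interval_11.
    unfold Rmin, Rmax in Hx; destruct Rle_dec; lra.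
  - apply (ex_RInt_continuous (V:=R_CompleteNormedModule)). intros z _. now apply cont_clamp'.
Qed.

Lemma G_le g s t : in_G g -> interval_11 s -> interval_11 t -> s <= t -> g s <= g t.
Proof.
  intros [Hm _] Hs Ht Hst. destruct (Req_dec s t) as [->|Hne]; [lra|].
  left. apply Hm; auto. lra.
Qed.

Lemma G_range g s : in_G g -> interval_11 s -> interval_11 (g s).
Proof.
  intros Hg Hs. pose proof Hg as [_ [_ [Hm1 H1]]].
  assert (I1 : interval_11 (-1)) by (unfold interval_11; lra).
  assert (I2 : interval_11 1) by (unfold interval_11; lra).
  split.
  - rewrite <- Hm1. apply G_le; auto. unfold interval_11 in Hs; lra.
  - rewrite <- H1. apply G_le; auto. unfold interval_11 in Hs; lra.
Qed.

Lemma G_surj g y : in_G g -> interval_11 y -> exists s, interval_11 s /\ g s = y.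
Proof.
  intros Hg Hy. pose proof Hg as [_ [Hc [Hm1 H1]]].
  destruct (Req_dec y (-1)) as [->|Hy1].
  { exists (-1). split; [unfold interval_11; lra | auto]. }
  destruct (Req_dec y 1) as [->|Hy2].
  { exists 1. split; [unfold interval_11; lra | auto]. }
  assert (Hcont : continuity (fun t => g (clamp t) - y)).
  { intro x. apply (continuity_pt_minus (fun t => g (clamp t)) (fun _ => y)).
    now apply cont_clamp.
    apply continuity_pt_const. intros a b; reflexivity. }
  unfold interval_11 in Hy.
  destruct (IVT _ (-1) 1 Hcont) as [z [Hz Hz']].
  - lra.
  - rewrite clamp_id by (unfold interval_11; lra). lra.
  - rewrite clamp_id by (unfold interval_11; lra). lra.
  - exists z. split. exact Hz. rewrite clamp_id in Hz' by exact Hz. lra.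
Qed.

Lemma ginv_spec g t : in_G g -> interval_11 t ->
  interval_11 (ginv g t) /\ g (ginv g t) = t.
Proof.
  intros Hg Ht. unfold ginv. apply epsilon_spec. now apply G_surj.
Qed.

Lemma G_inj g s t : in_G g -> interval_11 s -> interval_11 t -> g s = g t -> s = t.
Proof.
  intros Hg Hs Ht E. pose proof Hg as [Hm _].
  destruct (Rtotal_order s t) as [H|[H|H]]; auto.
  - specialize (Hm s t Hs Ht H). lra.
  - specialize (Hm t s Ht Hs H). lra.
Qed.

Lemma ginv_g g s : in_G g -> interval_11 s -> ginv g (g s) = s.
Proof.
  intros Hg Hs. destruct (ginv_spec g (g s) Hg (G_range g s Hg Hs)) as [H1 H2].
  now apply (G_inj g).
Qed.

Lemma ginv_mono g s t : in_G g -> interval_11 s -> interval_11 t -> s < t -> ginv g s < ginv g t.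
Proof.
  intros Hg Hs Ht Hst.
  destruct (ginv_spec g s Hg Hs) as [A1 A2]. destruct (ginv_spec g t Hg Ht) as [B1 B2].
  destruct (Rlt_le_dec (ginv g s) (ginv g t)) as [H|H]; auto.
  pose proof (G_le g _ _ Hg B1 A1 H). lra.
Qed.

Lemma ginv_le g s t : in_G g -> interval_11 s -> interval_11 t -> s <= t -> ginv g s <= ginv g t.
Proof.
  intros Hg Hs Ht [H|H]. left; now apply ginv_mono. subst; lra.
Qed.

Lemma mono_surj_cont phi :
  (forall s t, interval_11 s -> interval_11 t -> s < t -> phi s < phi t) ->
  (forall t, interval_11 t -> interval_11 (phi t)) ->
  (forall y, interval_11 y -> exists t, interval_11 t /\ phi t = y) ->
  cont_on_11 phi.
Proof.
  intros Hm Hr Hs x Hx eps Heps.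
  set (y := phi x).
  assert (Hy : interval_11 y) by now apply Hr.
  assert (Hle : forall s t, interval_11 s -> interval_11 t -> s <= t -> phi s <= phi t).
  { intros s t Hs' Ht' [H|H]. left; auto. subst; lra. }
  assert (L : exists d1, 0 < d1 /\ forall z, interval_11 z -> x - d1 < z -> y - eps < phi z).
  { destruct (Rlt_dec (-1) y) as [Hy1|Hy1].
    - set (yl := Rmax (-1) (y - eps/2)).
      assert (Hyl : interval_11 yl) by (unfold yl, interval_11 in *; unfold Rmax; destruct Rle_dec; lra).
      destruct (Hs yl Hyl) as [a [Ha Ha']].
      assert (Hyly : yl < y) by (unfold yl, Rmax; destruct Rle_dec; lra).
      assert (a < x).
      { destruct (Rlt_le_dec a x) as [H|H]; auto. pose proof (Hle x a Hx Ha H) as HH. fold y in HH. lra. }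
      exists (x - a). split; [lra|]. intros z Hz Hz'.
      assert (phi a < phi z) by (apply Hm; auto; lra).
      assert (y - eps/2 <= yl) by (unfold yl; apply Rmax_r).
      lra.
    - exists 1. split; [lra|]. intros z Hz _. pose proof (Hr z Hz). unfold interval_11 in *. lra. }
  assert (U : exists d2, 0 < d2 /\ forall z, interval_11 z -> z < x + d2 -> phi z < y + eps).
  { destruct (Rlt_dec y 1) as [Hy1|Hy1].
    - set (yl := Rmin 1 (y + eps/2)).
      assert (Hyl : interval_11 yl) by (unfold yl, interval_11 in *; unfold Rmin; destruct Rle_dec; lra).
      destruct (Hs yl Hyl) as [a [Ha Ha']].
      assert (Hyly : y < yl) by (unfold yl, Rmin; destruct Rle_dec; lra).
      assert (x < a).
      { destruct (Rlt_le_dec x a) as [H|H]; auto. pose proof (Hle a x Ha Hx H) as HH. fold y in HH. lra. }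
      exists (a - x). split; [lra|]. intros z Hz Hz'.
      assert (phi z < phi a) by (apply Hm; auto; lra).
      assert (yl <= y + eps/2) by (unfold yl; apply Rmin_r).
      lra.
    - exists 1. split; [lra|]. intros z Hz _. pose proof (Hr z Hz). unfold interval_11 in *. lra. }
  destruct L as [d1 [Hd1 L]]. destruct U as [d2 [Hd2 U]].
  exists (Rmin d1 d2). split. apply Rmin_glb_lt; auto.
  intros z Hz Hzx.
  assert (Rabs (z - x) < d1) by (eapply Rlt_le_trans; [exact Hzx| apply Rmin_l]).
  assert (Rabs (z - x) < d2) by (eapply Rlt_le_trans; [exact Hzx| apply Rmin_r]).
  apply Rabs_def2 in H. apply Rabs_def2 in H0.
  pose proof (L z Hz ltac:(lra)). pose proof (U z Hz ltac:(lra)).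
  apply Rabs_def1; fold y; lra.
Qed.

Lemma comp_cont f g : in_G f -> in_G g -> cont_on_11 (fun t => f (ginv g t)).
Proof.
  intros Hf Hg. apply mono_surj_cont.
  - intros s t Hs Ht Hst. pose proof Hf as [Hm _]. apply Hm.
    apply ginv_spec; auto. apply ginv_spec; auto. now apply ginv_mono.
  - intros t Ht. apply G_range; auto. apply ginv_spec; auto.
  - intros y Hy. destruct (G_surj f y Hf Hy) as [s [Hs Hs']].
    exists (g s). split. now apply G_range. rewrite ginv_g; auto.
Qed.


Lemma RInt_plusR f g a b : ex_RInt f a b -> ex_RInt g a b ->
  RInt (fun x => f x + g x) a b = RInt f a b + RInt g a b.
Proof. intros. apply (RInt_plus (V:=R_CompleteNormedModule)); auto. Qed.

Lemma RInt_minusR f g a b : ex_RInt f a b -> ex_RInt g a b ->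
  RInt (fun x => f x - g x) a b = RInt f a b - RInt g a b.
Proof. intros. apply (RInt_minus (V:=R_CompleteNormedModule)); auto. Qed.

Lemma RInt_scalR f k a b : ex_RInt f a b ->
  RInt (fun x => k * f x) a b = k * RInt f a b.
Proof. intros. apply (RInt_scal (V:=R_CompleteNormedModule)); auto. Qed.

Lemma RInt_constR (c a b : R) : RInt (fun _ => c) a b = (b - a) * c.
Proof. apply (RInt_const (V:=R_CompleteNormedModule)). Qed.

Lemma ex_RInt_plusR f g a b : ex_RInt f a b -> ex_RInt g a b -> ex_RInt (fun x => f x + g x) a b.
Proof. intros. apply (ex_RInt_plus (V:=R_NormedModule)); auto. Qed.
Lemma ex_RInt_minusR f g a b : ex_RInt f a b -> ex_RInt g a b -> ex_RInt (fun x => f x - g x) a b.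
Proof. intros. apply (ex_RInt_minus (V:=R_NormedModule)); auto. Qed.
Lemma ex_RInt_scalR f k a b : ex_RInt f a b -> ex_RInt (fun x => k * f x) a b.
Proof. intros. apply (ex_RInt_scal (V:=R_NormedModule)); auto. Qed.
Lemma ex_RInt_constR (c a b : R) : ex_RInt (fun _ => c) a b.
Proof. apply (ex_RInt_const (V:=R_NormedModule)). Qed.

Lemma RInt_bounds f a b m M : a <= b -> ex_RInt f a b ->
  (forall x, a < x < b -> m <= f x <= M) ->
  (b - a) * m <= RInt f a b <= (b - a) * M.
Proof.
  intros Hab Hf Hb. split.
  - rewrite <- RInt_constR. apply RInt_le; auto. apply ex_RInt_constR.
    intros x Hx; apply Hb; auto.
  - rewrite <- RInt_constR. apply RInt_le; auto. apply ex_RInt_constR.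
    intros x Hx; apply Hb; auto.
Qed.

Fixpoint sumk (N : nat) (a : nat -> R) : R :=
  match N with O => 0 | S m => sumk m a + a m end.

Lemma sumk_le N a b : (forall k, (k < N)%nat -> a k <= b k) -> sumk N a <= sumk N b.
Proof.
  induction N; simpl; intros H. lra.
  pose proof (H N ltac:(lia)). assert (sumk N a <= sumk N b) by (apply IHN; intros; apply H; lia). lra.
Qed.

Lemma sumk_plus N a b : sumk N (fun k => a k + b k) = sumk N a + sumk N b.
Proof. induction N; simpl; [lra|]. rewrite IHN. lra. Qed.

Lemma sumk_minus N a b : sumk N (fun k => a k - b k) = sumk N a - sumk N b.
Proof. induction N; simpl; [lra|]. rewrite IHN. lra. Qed.

Lemma sumk_scal N c a : sumk N (fun k => c * a k) = c * sumk N a.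
Proof. induction N; simpl; [lra|]. rewrite IHN. lra. Qed.

Lemma sumk_ext N a b : (forall k, (k < N)%nat -> a k = b k) -> sumk N a = sumk N b.
Proof.
  induction N; simpl; intros H; auto. rewrite IHN by (intros; apply H; lia). rewrite H by lia. auto.
Qed.

Lemma sumk_tele N a : sumk N (fun k => a (S k) - a k) = a N - a O.
Proof. induction N; simpl; [lra|]. rewrite IHN. lra. Qed.

Lemma RInt_part h p N :
  (forall k, (k <= N)%nat -> interval_11 (p k)) ->
  (forall a b, interval_11 a -> interval_11 b -> ex_RInt h a b) ->
  RInt h (p O) (p N) = sumk N (fun k => RInt h (p k) (p (S k))).
Proof.
  intros Hp Hex. induction N; simpl.
  - apply (RInt_point (V:=R_CompleteNormedModule)).
  - rewrite <- IHN by (intros; apply Hp; lia).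
    symmetry. apply (RInt_Chasles (V:=R_CompleteNormedModule)); apply Hex; apply Hp; lia.
Qed.

Lemma part_bounds h p N lo hi :
  (forall k, (k <= N)%nat -> interval_11 (p k)) ->
  (forall k, (k < N)%nat -> p k <= p (S k)) ->
  (forall a b, interval_11 a -> interval_11 b -> ex_RInt h a b) ->
  (forall k x, (k < N)%nat -> p k < x < p (S k) -> lo k <= h x <= hi k) ->
  sumk N (fun k => (p (S k) - p k) * lo k) <= RInt h (p O) (p N) <=
  sumk N (fun k => (p (S k) - p k) * hi k).
Proof.
  intros Hp Hm Hex Hb. rewrite RInt_part; auto. split; apply sumk_le; intros k Hk;
  (assert (B := RInt_bounds h (p k) (p (S k)) (lo k) (hi k) (Hm k Hk)
      (Hex _ _ (Hp k ltac:(lia)) (Hp (S k) ltac:(lia))) (fun x Hx => Hb k x Hk Hx))); lra.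
Qed.

Lemma exQ f g a b : in_G f -> in_G g -> interval_11 a -> interval_11 b ->
  ex_RInt (fun t => f (ginv g t)) a b.
Proof.
  intros Hf Hg [Ha1 Ha2] [Hb1 Hb2]. apply exRI; auto. now apply comp_cont.
Qed.

Lemma Q_lin a b f p g : in_G f -> in_G p -> in_G g ->
  Q (fun t => a * f t + b * p t) g = a * Q f g + b * Q p g.
Proof.
  intros Hf Hp Hg. unfold Q.
  assert (I1 : interval_11 (-1)) by (unfold interval_11; lra).
  assert (I2 : interval_11 1) by (unfold interval_11; lra).
  pose proof (exQ f g (-1) 1 Hf Hg I1 I2) as E1.
  pose proof (exQ p g (-1) 1 Hp Hg I1 I2) as E2.
  rewrite (RInt_plusR (fun t => a * f (ginv g t)) (fun t => b * p (ginv g t)));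
    [| apply ex_RInt_scalR; exact E1 | apply ex_RInt_scalR; exact E2].
  rewrite (RInt_scalR (fun t => f (ginv g t))) by exact E1.
  rewrite (RInt_scalR (fun t => p (ginv g t))) by exact E2.
  reflexivity.
Qed.

Lemma Q_diff f f' g r : in_G f -> in_G f' -> in_G g ->
  (forall t, interval_11 t -> Rabs (f t - f' t) <= r) ->
  Rabs (Q f g - Q f' g) <= 2 * r.
Proof.
  intros Hf Hf' Hg Hr. unfold Q.
  assert (I1 : interval_11 (-1)) by (unfold interval_11; lra).
  assert (I2 : interval_11 1) by (unfold interval_11; lra).
  rewrite <- RInt_minusR by (apply exQ; auto).
  replace (2 * r) with ((1 - -1) * r) by lra.
  apply abs_RInt_le_const. lra. apply ex_RInt_minusR; apply exQ; auto.
  intros t Ht. apply Hr. apply ginv_spec; [exact Hg | unfold interval_11; lra].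
Qed.

Lemma sum_small x : (forall N, (0 < N)%nat -> Rabs x <= 4 / INR N) -> x = 0.
Proof.
  intros H. destruct (Req_dec x 0) as [|Hx]; auto.
  assert (Hp : 0 < Rabs x / 4) by (pose proof (Rabs_pos_lt x Hx); lra).
  destruct (archimed_cor1 _ Hp) as [N [HN HN0]].
  specialize (H N HN0). apply lt_INR in HN0. simpl in HN0.
  unfold Rdiv in H. exfalso.
  assert (4 * / INR N < Rabs x) by lra. lra.
Qed.

Lemma Q_antisym f g : in_G f -> in_G g -> Q g f = - Q f g.
Proof.
  intros Hf Hg.
  assert (I1 : interval_11 (-1)) by (unfold interval_11; lra).
  assert (I2 : interval_11 1) by (unfold interval_11; lra).
  enough (Q f g + Q g f = 0) by lra.
  apply sum_small. intros N HN.
  assert (HNr : 0 < INR N) by (apply lt_INR in HN; simpl in HN; lra).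
  set (t := fun k : nat => -1 + 2 * INR k / INR N).
  set (s := fun k => ginv g (t k)).
  set (y := fun k => f (s k)).
  assert (Ht : forall k, (k <= N)%nat -> interval_11 (t k)).
  { intros k Hk. apply le_INR in Hk. pose proof (pos_INR k). unfold t, interval_11. split.
    - assert (0 <= 2 * INR k / INR N) by (apply Rmult_le_pos; [lra| left; apply Rinv_0_lt_compat; lra]). lra.
    - assert (2 * INR k / INR N <= 2). { apply Rmult_le_reg_r with (INR N); auto.
        unfold Rdiv. rewrite Rmult_assoc, Rinv_l by lra. nra. } lra. }
  assert (Htm : forall k, t (S k) - t k = 2 / INR N).
  { intros k. unfold t. rewrite S_INR. field. lra. }
  assert (Htle : forall k, t k <= t (S k)).
  { intros k. pose proof (Htm k). assert (0 < 2 / INR N) by (apply Rdiv_lt_0_compat; lra). lra. }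
  assert (Hs : forall k, (k <= N)%nat -> interval_11 (s k)).
  { intros k Hk. apply ginv_spec; auto. }
  assert (Hgs : forall k, (k <= N)%nat -> g (s k) = t k).
  { intros k Hk. apply ginv_spec; auto. }
  assert (Hy : forall k, (k <= N)%nat -> interval_11 (y k)).
  { intros k Hk. apply G_range; auto. }
  assert (Hsm : forall k, (k < N)%nat -> s k <= s (S k)).
  { intros k Hk. apply ginv_le; [exact Hg|apply Ht; lia|apply Ht; lia|apply Htle]. }
  assert (Hym : forall k, (k < N)%nat -> y k <= y (S k)).
  { intros k Hk. apply G_le; auto; apply Hs; lia. }
  assert (t0 : t O = -1) by (unfold t; simpl; field; lra).
  assert (tN : t N = 1) by (unfold t; field; lra).
  assert (y0 : y O = -1).
  { unfold y, s. rewrite t0. pose proof Hg as [_ [_ [Hm1 _]]]. rewrite <- Hm1 at 1.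
    rewrite ginv_g; auto. apply Hf. }
  assert (yN : y N = 1).
  { unfold y, s. rewrite tN. pose proof Hg as [_ [_ [_ H1]]]. rewrite <- H1 at 1.
    rewrite ginv_g; auto. apply Hf. }
  assert (B1 := part_bounds (fun u => f (ginv g u)) t N y (fun k => y (S k)) Ht
     (fun k Hk => Htle k)
     (fun a b Ha Hb => exQ f g a b Hf Hg Ha Hb)).
  assert (B2 := part_bounds (fun u => g (ginv f u)) y N t (fun k => t (S k)) Hy Hym
     (fun a b Ha Hb => exQ g f a b Hg Hf Ha Hb)).
  rewrite t0, tN in B1. rewrite y0, yN in B2. fold (Q f g) in B1. fold (Q g f) in B2.
  destruct B1 as [B1l B1u].
  { intros k x Hk Hx.
    assert (Hxi : interval_11 x).
    { pose proof (Ht k ltac:(lia)); pose proof (Ht (S k) ltac:(lia)); unfold interval_11 in *; lra. }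
    assert (A1 : s k <= ginv g x) by (apply ginv_le; [exact Hg|apply Ht; lia|exact Hxi|lra]).
    assert (A2 : ginv g x <= s (S k)) by (apply ginv_le; [exact Hg|exact Hxi|apply Ht; lia|lra]).
    assert (Hgx : interval_11 (ginv g x)) by (apply ginv_spec; auto).
    unfold y. split.
    - apply G_le; [exact Hf|apply Hs; lia|exact Hgx|exact A1].
    - apply G_le; [exact Hf|exact Hgx|apply Hs; lia|exact A2]. }
  destruct B2 as [B2l B2u].
  { intros k x Hk Hx.
    assert (Hxi : interval_11 x).
    { pose proof (Hy k ltac:(lia)); pose proof (Hy (S k) ltac:(lia)); unfold interval_11 in *; lra. }
    assert (E1 : ginv f (y k) = s k) by (unfold y; apply ginv_g; auto; apply Hs; lia).
    assert (E2 : ginv f (y (S k)) = s (S k)) by (unfold y; apply ginv_g; auto; apply Hs; lia).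
    assert (A1 : s k <= ginv f x) by (rewrite <- E1; apply ginv_le; [exact Hf|apply Hy; lia|exact Hxi|lra]).
    assert (A2 : ginv f x <= s (S k)) by (rewrite <- E2; apply ginv_le; [exact Hf|exact Hxi|apply Hy; lia|lra]).
    assert (Hgx : interval_11 (ginv f x)) by (apply ginv_spec; auto).
    rewrite <- (Hgs k) by lia. rewrite <- (Hgs (S k)) by lia. split.
    - apply G_le; [exact Hg|apply Hs; lia|exact Hgx|exact A1].
    - apply G_le; [exact Hg|exact Hgx|apply Hs; lia|exact A2]. }
  assert (Tel : sumk N (fun k => t (S k) * y (S k) - t k * y k) = 0).
  { rewrite (sumk_tele N (fun k => t k * y k)). rewrite t0, tN, y0, yN. lra. }
  assert (Sd : sumk N (fun k => (y (S k) - y k) * (2 / INR N)) = 4 / INR N).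
  { rewrite (sumk_ext N _ (fun k => (2 / INR N) * (y (S k) - y k))) by (intros; lra).
    rewrite sumk_scal, sumk_tele, y0, yN. field. lra. }
  apply Rabs_le. split.
  - assert (E : sumk N (fun k => (t (S k) - t k) * y k) + sumk N (fun k => (y (S k) - y k) * t k)
              = sumk N (fun k => t (S k) * y (S k) - t k * y k) - sumk N (fun k => (y (S k) - y k) * (2 / INR N))).
    { rewrite <- sumk_plus, <- sumk_minus. apply sumk_ext. intros k _. rewrite <- (Htm k). ring. }
    rewrite Tel, Sd in E. lra.
  - assert (E : sumk N (fun k => (t (S k) - t k) * y (S k)) + sumk N (fun k => (y (S k) - y k) * t (S k))
              = sumk N (fun k => t (S k) * y (S k) - t k * y k) + sumk N (fun k => (y (S k) - y k) * (2 / INR N))).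
    { rewrite <- !sumk_plus. apply sumk_ext. intros k _. rewrite <- (Htm k). ring. }
    rewrite Tel, Sd in E. lra.
Qed.


Definition sumabs m (c : nat -> R) := sumk m (fun j => Rabs (c j)).

Lemma sumabs_pos m c : 0 <= sumabs m c.
Proof. induction m; unfold sumabs in *; simpl. lra. pose proof (Rabs_pos (c m)); lra. Qed.

Lemma sumabs_ge m c i : (i < m)%nat -> Rabs (c i) <= sumabs m c.
Proof.
  induction m; intros H. lia. unfold sumabs in *; simpl.
  destruct (Nat.eq_dec i m) as [->|Hne].
  - pose proof (sumabs_pos m c). unfold sumabs in H0. lra.
  - pose proof (IHm ltac:(lia)). pose proof (Rabs_pos (c m)). lra.
Qed.

Lemma lc_ext m c c' F F' t : (forall j, (j < m)%nat -> c j = c' j) ->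
  (forall j, (j < m)%nat -> F j t = F' j t) -> lin_comb m c F t = lin_comb m c' F' t.
Proof.
  induction m; simpl; intros H1 H2; auto.
  rewrite IHm by (intros; auto). rewrite H1, H2 by lia. auto.
Qed.

Lemma lc_bound m c F t M : (forall j, (j < m)%nat -> Rabs (F j t) <= M) ->
  Rabs (lin_comb m c F t) <= sumabs m c * M.
Proof.
  induction m; simpl; intros H. rewrite Rabs_R0; unfold sumabs; simpl; lra.
  unfold sumabs in *; simpl.
  eapply Rle_trans. apply Rabs_triang. rewrite Rabs_mult.
  pose proof (IHm ltac:(intros; apply H; lia)).
  pose proof (H m ltac:(lia)).
  assert (Rabs (c m) * Rabs (F m t) <= Rabs (c m) * M) by (apply Rmult_le_compat_l; auto; apply Rabs_pos).
  lra.
Qed.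

Lemma lc_linF m c F a G t :
  lin_comb m c (fun j t => F j t - a j * G t) t = lin_comb m c F t - lin_comb m c (fun j _ => a j) t * G t.
Proof. induction m; simpl. ring. rewrite IHm. ring. Qed.

Lemma lc_sub m c F F' t :
  lin_comb m c (fun j t => F j t - F' j t) t = lin_comb m c F t - lin_comb m c F' t.
Proof. induction m; simpl. ring. rewrite IHm. ring. Qed.

Lemma lc_zero m c F t : (forall j, (j < m)%nat -> F j t = 0) -> lin_comb m c F t = 0.
Proof. induction m; simpl; intros H. auto. rewrite IHm, H by (intros; try apply H; lia). ring. Qed.

Lemma lc_zero_c m c F t : (forall j, (j < m)%nat -> c j = 0) -> lin_comb m c F t = 0.
Proof. induction m; simpl; intros H. auto. rewrite IHm, H by (intros; try apply H; lia). ring. Qed.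

Lemma lc_lin_c m a b c d F t :
  lin_comb m (fun j => a * c j + b * d j) F t = a * lin_comb m c F t + b * lin_comb m d F t.
Proof. induction m; simpl. ring. rewrite IHm. ring. Qed.

Lemma lc_const m c a t t' : lin_comb m c (fun j (_ : R) => a j) t = lin_comb m c (fun j _ => a j) t'.
Proof. induction m; simpl; auto. rewrite IHm. auto. Qed.

Definition QI m g K := forall c B, (forall t, interval_11 t -> Rabs (lin_comb m c g t) <= B) ->
  sumabs m c <= K * B.

Lemma QI_indep m g K : QI m g K -> lin_indep m g.
Proof.
  intros HQ c Hc i Hi.
  assert (sumabs m c <= K * 0). { apply HQ. intros t Ht. rewrite Hc; auto. rewrite Rabs_R0; lra. }
  pose proof (sumabs_ge m c i Hi). rewrite Rmult_0_r in H.
  pose proof (Rabs_pos (c i)). assert (Rabs (c i) = 0) by lra.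
  destruct (Req_dec (c i) 0); auto. apply Rabs_no_R0 in H3. lra.
Qed.

Lemma Rabs_sub_le a b : Rabs (a - b) <= Rabs a + Rabs b.
Proof. unfold Rminus. eapply Rle_trans. apply Rabs_triang. rewrite Rabs_Ropp. lra. Qed.

Lemma QI_open m g h K delta : QI m g K -> 0 <= K -> 0 <= delta -> K * delta <= 1/2 ->
  (forall j t, (j < m)%nat -> interval_11 t -> Rabs (h j t - g j t) <= delta) ->
  QI m h (2 * K).
Proof.
  intros HQ HK Hd HKd Hhg c B HB.
  assert (S1 : sumabs m c <= K * (B + sumabs m c * delta)).
  { apply HQ. intros t Ht.
    assert (E : lin_comb m c g t = lin_comb m c h t - lin_comb m c (fun j t => h j t - g j t) t).
    { rewrite lc_sub. ring. }
    rewrite E. eapply Rle_trans. apply Rabs_sub_le.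
    pose proof (HB t Ht).
    pose proof (lc_bound m c (fun j t => h j t - g j t) t delta (fun j Hj => Hhg j t Hj Ht)).
    lra. }
  pose proof (sumabs_pos m c).
  assert (K * delta * sumabs m c <= 1/2 * sumabs m c) by (apply Rmult_le_compat_r; auto).
  nra.
Qed.

Lemma QI_exists m : forall g M, (forall j t, (j < m)%nat -> interval_11 t -> Rabs (g j t) <= M) ->
  lin_indep m g -> exists K, 0 <= K /\ QI m g K.
Proof.
  induction m; intros g M HM Hind.
  - exists 0. split. lra. intros c B HB. unfold sumabs; simpl.
    assert (0 <= B). { eapply Rle_trans. apply Rabs_pos. apply (HB 0). unfold interval_11; lra. }
    lra.
  -
    assert (Hex : exists t0, interval_11 t0 /\ g m t0 <> 0).
    { apply NNPP. intro Hn.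
      set (c := fun j => if Nat.eqb j m then 1 else 0).
      assert (Hc : forall t, interval_11 t -> lin_comb (S m) c g t = 0).
      { intros t Ht. simpl. rewrite lc_zero_c.
        - assert (g m t = 0). { apply NNPP. intro Hz. apply Hn. exists t. auto. } rewrite H. ring.
        - intros j Hj. unfold c. destruct (Nat.eqb_spec j m). lia. ring. }
      pose proof (Hind c Hc m ltac:(lia)). unfold c in H. rewrite Nat.eqb_refl in H. lra. }
    destruct Hex as [t0 [Ht0 Hg0]].
    set (gm0 := g m t0).
    assert (Hgm0 : 0 < Rabs gm0) by (apply Rabs_pos_lt; auto).
    assert (HM0 : 0 <= M) by (eapply Rle_trans; [apply Rabs_pos| apply (HM m t0); auto]).
    set (al := fun j => g j t0 / gm0).
    assert (Hal : forall j, (j < S m)%nat -> Rabs (al j) <= M / Rabs gm0).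
    { intros j Hj. unfold al. unfold Rdiv. rewrite Rabs_mult, Rabs_inv.
      apply Rmult_le_compat_r. left; apply Rinv_0_lt_compat; auto. apply HM; auto. }
    set (h := fun j t => g j t - al j * g m t).
    set (M' := M + M / Rabs gm0 * M).
    assert (HMh : forall j t, (j < m)%nat -> interval_11 t -> Rabs (h j t) <= M').
    { intros j t Hj Ht. unfold h, M'. eapply Rle_trans. apply Rabs_sub_le.
      rewrite Rabs_mult. pose proof (HM j t ltac:(lia) Ht). pose proof (HM m t ltac:(lia) Ht).
      pose proof (Hal j ltac:(lia)).
      assert (Rabs (al j) * Rabs (g m t) <= M / Rabs gm0 * M).
      { apply Rmult_le_compat; auto; apply Rabs_pos. }
      lra. }
    set (Sal := fun c => lin_comb m c (fun j (_:R) => al j) 0).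
    assert (Hid : forall c t, lin_comb (S m) c g t = lin_comb m c h t + (c m + Sal c) * g m t).
    { intros c t. simpl. unfold h. rewrite lc_linF. unfold Sal. rewrite (lc_const m c al t 0). ring. }
    assert (Hindh : lin_indep m h).
    { intros c Hc i Hi.
      set (c' := fun j => if Nat.eqb j m then - Sal c else c j).
      assert (Hc' : forall t, interval_11 t -> lin_comb (S m) c' g t = 0).
      { intros t Ht. rewrite Hid.
        assert (E1 : lin_comb m c' h t = lin_comb m c h t).
        { apply lc_ext; auto. intros j Hj. unfold c'. destruct (Nat.eqb_spec j m). lia. auto. }
        assert (E2 : Sal c' = Sal c).
        { unfold Sal. apply lc_ext; auto. intros j Hj. unfold c'. destruct (Nat.eqb_spec j m). lia. auto. }
        rewrite E1, E2, Hc by auto. unfold c'. rewrite Nat.eqb_refl. ring. }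
      pose proof (Hind c' Hc' i ltac:(lia)). unfold c' in H.
      destruct (Nat.eqb_spec i m). lia. auto. }
    destruct (IHm h M' HMh Hindh) as [Kh [HKh HQh]].
    set (A := 1 + M / Rabs gm0).
    assert (HA : 0 <= M / Rabs gm0) by (apply Rdiv_le_0_compat; lra).
    exists (Kh * A + / Rabs gm0 + Kh * A * (M / Rabs gm0)).
    split.
    { assert (0 <= Kh * A) by (apply Rmult_le_pos; unfold A; lra).
      assert (0 <= Kh * A * (M / Rabs gm0)) by (apply Rmult_le_pos; lra).
      pose proof (Rinv_0_lt_compat _ Hgm0). lra. }
    intros c B HB.
    assert (HB0 : 0 <= B). { eapply Rle_trans. apply Rabs_pos. apply (HB 0). unfold interval_11; lra. }
    set (d := c m + Sal c).
    assert (Hh0 : lin_comb m c h t0 = 0).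
    { apply lc_zero. intros j Hj. unfold h, al, gm0. field. auto. }
    assert (Hd : Rabs d <= B / Rabs gm0).
    { pose proof (HB t0 Ht0). rewrite Hid, Hh0 in H. fold d in H. rewrite Rplus_0_l, Rabs_mult in H.
      fold gm0 in H. apply Rmult_le_reg_r with (Rabs gm0); auto. unfold Rdiv.
      rewrite Rmult_assoc, Rinv_l by lra. lra. }
    assert (Hlh : forall t, interval_11 t -> Rabs (lin_comb m c h t) <= B * A).
    { intros t Ht. pose proof (HB t Ht). rewrite Hid in H. fold d in H.
      assert (E : lin_comb m c h t = (lin_comb m c h t + d * g m t) - d * g m t) by ring.
      rewrite E. eapply Rle_trans. apply Rabs_sub_le. rewrite Rabs_mult.
      assert (Rabs d * Rabs (g m t) <= B / Rabs gm0 * M).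
      { apply Rmult_le_compat; try apply Rabs_pos; auto. }
      unfold A. unfold Rdiv in *. nra. }
    pose proof (HQh c (B * A) Hlh) as Hs.
    assert (Hcm : Rabs (c m) <= B / Rabs gm0 + sumabs m c * (M / Rabs gm0)).
    { assert (E : c m = d - Sal c) by (unfold d; ring). rewrite E.
      eapply Rle_trans. apply Rabs_sub_le.
      assert (Rabs (Sal c) <= sumabs m c * (M / Rabs gm0)).
      { unfold Sal. apply lc_bound. intros j Hj. apply Hal. lia. }
      lra. }
    unfold sumabs in *; simpl. fold (sumabs m c) in *.
    assert (sumabs m c * (M / Rabs gm0) <= Kh * (B * A) * (M / Rabs gm0)) by (apply Rmult_le_compat_r; auto).
    assert (E : (Kh * A + / Rabs gm0 + Kh * A * (M / Rabs gm0)) * B =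
       Kh * (B * A) + B / Rabs gm0 + Kh * (B * A) * (M / Rabs gm0)) by (unfold Rdiv; ring).
    rewrite E. lra.
Qed.

Lemma indep_open m g M : (forall j t, (j < m)%nat -> interval_11 t -> Rabs (g j t) <= M) ->
  lin_indep m g -> exists delta, 0 < delta /\ forall h,
    (forall j t, (j < m)%nat -> interval_11 t -> Rabs (h j t - g j t) <= delta) -> lin_indep m h.
Proof.
  intros HM Hind. destruct (QI_exists m g M HM Hind) as [K [HK HQ]].
  exists (/ (2 * (K + 1))). split. apply Rinv_0_lt_compat; lra.
  intros h Hh. apply (QI_indep m h (2 * K)). apply (QI_open m g h K (/ (2 * (K + 1)))); auto.
  left; apply Rinv_0_lt_compat; lra.
  apply Rmult_le_reg_r with (2 * (K + 1)). lra.
  rewrite Rmult_assoc, Rinv_l by lra. nra.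
Qed.


Lemma I_opp t : interval_11 t -> interval_11 (- t).
Proof. unfold interval_11; lra. Qed.

Lemma even_bound f t : in_G f -> interval_11 t -> Rabs (even_part f t) <= 1.
Proof.
  intros Hf Ht. pose proof (G_range f t Hf Ht). pose proof (G_range f (-t) Hf (I_opp t Ht)).
  unfold even_part, interval_11 in *. apply Rabs_le. lra.
Qed.

Lemma even_diff f f' r : (forall t, interval_11 t -> Rabs (f t - f' t) <= r) ->
  forall t, interval_11 t -> Rabs (even_part f t - even_part f' t) <= r.
Proof.
  intros H t Ht. pose proof (H t Ht). pose proof (H (-t) (I_opp t Ht)).
  unfold even_part. replace ((f t + f (- t)) / 2 - (f' t + f' (- t)) / 2) with
    ((f t - f' t) / 2 + (f (-t) - f' (-t)) / 2) by field.
  eapply Rle_trans. apply Rabs_triang. unfold Rdiv. rewrite !Rabs_mult.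
  rewrite Rabs_inv, (Rabs_pos_eq 2) by lra. lra.
Qed.

Lemma finite_min1 n (b : nat -> R) : (forall i, (i < n)%nat -> 0 < b i) ->
  exists m, 0 < m /\ forall i, (i < n)%nat -> m <= b i.
Proof.
  induction n; intros H. exists 1; split; [lra| intros; lia].
  destruct IHn as [m [Hm Hm']]; [intros; apply H; lia|].
  exists (Rmin m (b n)). split. { apply Rmin_glb_lt; [exact Hm | apply H; lia]. }
  intros i Hi. destruct (Nat.eq_dec i n) as [->|Hne]. apply Rmin_r.
  eapply Rle_trans. apply Rmin_l. apply Hm'; lia.
Qed.

Lemma finite_min2 n (a : nat -> nat -> R) :
  (forall i j, (i < n)%nat -> (j < n)%nat -> i <> j -> 0 < a i j) ->
  exists m, 0 < m /\ forall i j, (i < n)%nat -> (j < n)%nat -> i <> j -> m <= a i j.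
Proof.
  induction n; intros H. exists 1; split; [lra| intros; lia].
  destruct IHn as [m [Hm Hm']]; [intros; apply H; lia|].
  destruct (finite_min1 n (fun k => Rmin (a k n) (a n k))) as [m' [Hm1 Hm1']].
  { intros i Hi. apply Rmin_glb_lt; apply H; lia. }
  exists (Rmin m m'). split. apply Rmin_glb_lt; auto.
  intros i j Hi Hj Hij.
  destruct (Nat.eq_dec i n) as [->|Hi'].
  - eapply Rle_trans. apply Rmin_r. eapply Rle_trans. apply (Hm1' j). lia. apply Rmin_r.
  - destruct (Nat.eq_dec j n) as [->|Hj'].
    + eapply Rle_trans. apply Rmin_r. eapply Rle_trans. apply (Hm1' i). lia. apply Rmin_l.
    + eapply Rle_trans. apply Rmin_l. apply Hm'; lia.
Qed.

Lemma Q_cont f g f' g' r : in_G f -> in_G g -> in_G f' -> in_G g' ->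
  (forall t, interval_11 t -> Rabs (f' t - f t) <= r) ->
  (forall t, interval_11 t -> Rabs (g' t - g t) <= r) ->
  Rabs (Q f' g' - Q f g) <= 4 * r.
Proof.
  intros Hf Hg Hf' Hg' H1 H2.
  pose proof (Q_diff f' f g' r Hf' Hf Hg' H1) as A.
  pose proof (Q_diff g' g f r Hg' Hg Hf H2) as B.
  rewrite (Q_antisym f g' Hf Hg'), (Q_antisym f g Hf Hg) in B.
  replace (Q f' g' - Q f g) with ((Q f' g' - Q f g') - (- Q f g' - - Q f g)) by ring.
  eapply Rle_trans. apply Rabs_sub_le. lra.
Qed.

Lemma ball_weak n eps F H : ball_n n eps F H ->
  forall i t, (i < n)%nat -> interval_11 t -> Rabs (H i t - F i t) <= eps.
Proof.
  intros Hb i t Hi Ht. destruct (Hb i Hi) as [r [Hr Hr']].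
  rewrite Rabs_minus_sym. specialize (Hr' t Ht). lra.
Qed.

Lemma Q_open n F : in_G0n n F -> Q_nonzero n F -> exists eps, 0 < eps /\
  forall H, in_G0n n H -> (forall i t, (i < n)%nat -> interval_11 t -> Rabs (H i t - F i t) <= eps) ->
  Q_nonzero n H.
Proof.
  intros HF HQ.
  destruct (finite_min2 n (fun i j => Rabs (Q (F i) (F j)))) as [m [Hm Hm']].
  { intros i j Hi Hj Hij. apply Rabs_pos_lt. apply HQ; auto. }
  exists (m / 8). split. lra.
  intros H HH Hb i j Hi Hj Hij.
  pose proof (Q_cont (F i) (F j) (H i) (H j) (m/8) (proj1 (HF i Hi)) (proj1 (HF j Hj))
     (proj1 (HH i Hi)) (proj1 (HH j Hj)) (fun t Ht => Hb i t Hi Ht) (fun t Ht => Hb j t Hj Ht)).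
  pose proof (Hm' i j Hi Hj Hij). intro E. rewrite E in H0.
  rewrite Rminus_0_l, Rabs_Ropp in H0. lra.
Qed.

Lemma open_Gdelta n S : open_in_G0n n S -> Gdelta_in_G0n n S.
Proof.
  intros Ho. exists (fun _ => S). split. intros; auto.
  intros F. split. intros HS. split. apply (Ho F HS). auto. intros [_ H]. apply (H O).
Qed.

Lemma GENplus_open n : open_in_G0n n (GENplus n).
Proof.
  intros F [HF [Hind HQ]]. split; auto.
  destruct (indep_open n (fun i => even_part (F i)) 1) as [d1 [Hd1 Hd1']]; auto.
  { intros j t Hj Ht. apply even_bound; auto. apply HF; auto. }
  destruct (Q_open n F HF HQ) as [d2 [Hd2 Hd2']].
  exists (Rmin d1 d2). split. apply Rmin_glb_lt; auto.
  intros H HH Hb. pose proof (ball_weak n _ F H Hb) as Hw.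
  split; auto. split.
  - apply Hd1'. intros j t Hj Ht. apply (even_diff (H j) (F j)); auto.
    intros u Hu. eapply Rle_trans. apply Hw; auto. apply Rmin_l.
  - apply Hd2'; auto. intros i t Hi Ht. eapply Rle_trans. apply Hw; auto. apply Rmin_r.
Qed.

Definition EF n (F : nat -> R -> R) := fun j t => if Nat.eqb j n then t else F j t.

Lemma EF_comb n F c0 c t :
  c0 * t + lin_comb n c F t = lin_comb (S n) (fun j => if Nat.eqb j n then c0 else c j) (EF n F) t.
Proof.
  simpl. rewrite Nat.eqb_refl. unfold EF at 2. rewrite Nat.eqb_refl.
  rewrite (lc_ext n (fun j => if Nat.eqb j n then c0 else c j) c (EF n F) F). ring.
  - intros j Hj. destruct (Nat.eqb_spec j n). lia. auto.
  - intros j Hj. unfold EF. destruct (Nat.eqb_spec j n). lia. auto.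
Qed.

Lemma EF_indep n F : lin_indep_with_id n F <-> lin_indep (S n) (EF n F).
Proof.
  split.
  - intros Hi c Hc.
    destruct (Hi (c n) c) as [H1 H2].
    { intros t Ht. rewrite EF_comb. rewrite <- (Hc t Ht). apply lc_ext; auto.
      intros j Hj. destruct (Nat.eqb_spec j n); subst; auto. }
    intros i Hin. destruct (Nat.eq_dec i n) as [->|Hne]; auto. apply H2; lia.
  - intros Hi c0 c Hc.
    set (c' := fun j => if Nat.eqb j n then c0 else c j).
    assert (Hc' : forall t, interval_11 t -> lin_comb (S n) c' (EF n F) t = 0).
    { intros t Ht. unfold c'. rewrite <- EF_comb. auto. }
    split.
    + pose proof (Hi c' Hc' n ltac:(lia)). unfold c' in H. rewrite Nat.eqb_refl in H. auto.
    + intros i Hin. pose proof (Hi c' Hc' i ltac:(lia)). unfold c' in H.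
      destruct (Nat.eqb_spec i n). lia. auto.
Qed.

Lemma GEN_open n : open_in_G0n n (GEN n).
Proof.
  intros F [HF [Hind HQ]]. split; auto.
  destruct (indep_open (S n) (EF n F) 1) as [d1 [Hd1 Hd1']].
  { intros j t Hj Ht. unfold EF. destruct (Nat.eqb_spec j n).
    unfold interval_11 in Ht; apply Rabs_le; lra.
    pose proof (G_range (F j) t (proj1 (HF j ltac:(lia))) Ht). unfold interval_11 in *; apply Rabs_le; lra. }
  { now apply EF_indep. }
  destruct (Q_open n F HF HQ) as [d2 [Hd2 Hd2']].
  exists (Rmin d1 d2). split. apply Rmin_glb_lt; auto.
  intros H HH Hb. pose proof (ball_weak n _ F H Hb) as Hw.
  split; auto. split.
  - apply EF_indep. apply Hd1'. intros j t Hj Ht. unfold EF. destruct (Nat.eqb_spec j n).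
    + rewrite Rminus_diag, Rabs_R0. lra.
    + eapply Rle_trans. apply Hw; auto. lia. apply Rmin_l.
  - apply Hd2'; auto. intros i t Hi Ht. eapply Rle_trans. apply Hw; auto. apply Rmin_r.
Qed.

Lemma GENplus_GEN n F : GENplus n F -> GEN n F.
Proof.
  intros [HF [Hind HQ]]. split; auto. split; auto.
  intros c0 c Hc.
  assert (Hz : forall i, (i < n)%nat -> c i = 0).
  { apply Hind. intros t Ht.
    assert (E : lin_comb n c (fun i => even_part (F i)) t = (lin_comb n c F t + lin_comb n c F (-t)) / 2).
    { clear. induction n; simpl. field. rewrite IHn. unfold even_part. field. }
    rewrite E. pose proof (Hc t Ht). pose proof (Hc (-t) (I_opp t Ht)). lra. }
  split; auto.
  pose proof (Hc 1 ltac:(unfold interval_11; lra)). rewrite lc_zero_c in H by auto. lra.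
Qed.


Lemma cont_lin a b f g : cont_on_11 f -> cont_on_11 g -> cont_on_11 (fun t => a * f t + b * g t).
Proof.
  intros Hf Hg x Hx eps Heps.
  set (e := eps / (2 * (Rabs a + Rabs b + 1))).
  assert (He : 0 < e) by (unfold e; apply Rdiv_lt_0_compat; [lra| pose proof (Rabs_pos a); pose proof (Rabs_pos b); lra]).
  destruct (Hf x Hx e He) as [d1 [Hd1 H1]]. destruct (Hg x Hx e He) as [d2 [Hd2 H2]].
  exists (Rmin d1 d2). split. apply Rmin_glb_lt; auto.
  intros y Hy Hyx.
  assert (A1 := H1 y Hy (Rlt_le_trans _ _ _ Hyx (Rmin_l _ _))).
  assert (A2 := H2 y Hy (Rlt_le_trans _ _ _ Hyx (Rmin_r _ _))).
  replace (a * f y + b * g y - (a * f x + b * g x)) with (a * (f y - f x) + b * (g y - g x)) by ring.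
  eapply Rle_lt_trans. apply Rabs_triang. rewrite !Rabs_mult.
  assert (Rabs a * Rabs (f y - f x) <= Rabs a * e) by (apply Rmult_le_compat_l; [apply Rabs_pos| lra]).
  assert (Rabs b * Rabs (g y - g x) <= Rabs b * e) by (apply Rmult_le_compat_l; [apply Rabs_pos| lra]).
  assert ((Rabs a + Rabs b) * e < eps).
  { pose proof (Rabs_pos a); pose proof (Rabs_pos b).
    assert (E : e * (2 * (Rabs a + Rabs b + 1)) = eps) by (unfold e; field; lra).
    nra. }
  lra.
Qed.

Lemma G0_convex l f p : in_G0 f -> in_G0 p -> 0 <= l <= 1 ->
  in_G0 (fun t => (1 - l) * f t + l * p t).
Proof.
  intros [[Hfm [Hfc [Hf1 Hf2]]] Hfi] [[Hpm [Hpc [Hp1 Hp2]]] Hpi] Hl.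
  split; [split; [|split; [|split]]|].
  - intros s t Hs Ht Hst. pose proof (Hfm s t Hs Ht Hst). pose proof (Hpm s t Hs Ht Hst).
    destruct (Rle_dec (f t - f s) (p t - p s)).
    + assert (l * (p t - p s - (f t - f s)) >= 0) by (apply Rle_ge, Rmult_le_pos; lra). nra.
    + assert ((1 - l) * (f t - f s - (p t - p s)) >= 0) by (apply Rle_ge, Rmult_le_pos; lra). nra.
  - apply cont_lin; auto.
  - rewrite Hf1, Hp1. ring.
  - rewrite Hf2, Hp2. ring.
  - assert (I1 : -1 <= -1) by lra. assert (I2 : -1 <= 1) by lra. assert (I3 : 1 <= 1) by lra.
    assert (E1 : ex_RInt f (-1) 1) by (apply exRI; auto).
    assert (E2 : ex_RInt p (-1) 1) by (apply exRI; auto).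
    rewrite (RInt_plusR (fun t => (1 - l) * f t) (fun t => l * p t));
      [| apply ex_RInt_scalR; exact E1 | apply ex_RInt_scalR; exact E2].
    rewrite (RInt_scalR f) by exact E1. rewrite (RInt_scalR p) by exact E2.
    rewrite Hfi, Hpi. rewrite !Rmult_0_r, Rplus_0_r; reflexivity.
Qed.

Lemma avoid m (bad : nat -> R -> Prop) :
  (forall i x y, (i < m)%nat -> bad i x -> bad i y -> x = y) ->
  forall eps, 0 < eps -> exists l, 0 < l < eps /\ forall i, (i < m)%nat -> ~ bad i l.
Proof.
  induction m; intros Hb eps Heps.
  - exists (eps / 2). split. lra. intros; lia.
  - destruct (IHm (fun i x y Hi => Hb i x y ltac:(lia)) eps Heps) as [l1 [Hl1 Hl1']].
    destruct (classic (bad m l1)) as [Hbad|Hgood].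
    + destruct (IHm (fun i x y Hi => Hb i x y ltac:(lia)) l1 (proj1 Hl1)) as [l2 [Hl2 Hl2']].
      exists l2. split. lra. intros i Hi. destruct (Nat.eq_dec i m) as [->|Hne].
      * intro Hb2. pose proof (Hb m l1 l2 ltac:(lia) Hbad Hb2). lra.
      * apply Hl2'; lia.
    + exists l1. split; auto. intros i Hi. destruct (Nat.eq_dec i m) as [->|Hne]; auto. apply Hl1'; lia.
Qed.

Lemma affine_unique a b x y : (a <> 0 \/ b <> 0) ->
  (1 - x) * a + x * b = 0 -> (1 - y) * a + y * b = 0 -> x = y.
Proof.
  intros Hab Hx Hy.
  assert (E : (x - y) * (b - a) = 0) by lra.
  apply Rmult_integral in E. destruct E as [E|E]. lra.
  assert (b = a) by lra. subst b. assert (a = 0) by lra. destruct Hab; lra.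
Qed.

Definition upd (H : nat -> R -> R) j (f : R -> R) := fun i => if Nat.eqb i j then f else H i.

Lemma lc_upd m c G j g t : (j < m)%nat ->
  lin_comb m c (upd G j g) t = lin_comb m c G t + c j * (g t - G j t).
Proof.
  induction m; intros Hj. lia. simpl.
  destruct (Nat.eq_dec j m) as [->|Hne].
  - rewrite (lc_ext m c c (upd G m g) G). unfold upd. rewrite Nat.eqb_refl. ring.
    auto. intros k Hk. unfold upd. destruct (Nat.eqb_spec k m). lia. auto.
  - rewrite IHm by lia. unfold upd. destruct (Nat.eqb_spec m j). lia. ring.
Qed.

Lemma indep_ext m F F' : lin_indep m F -> (forall i t, (i < m)%nat -> interval_11 t -> F i t = F' i t) ->
  lin_indep m F'.
Proof.
  intros Hi He c Hc. apply Hi. intros t Ht. rewrite <- (Hc t Ht). apply lc_ext; [auto|].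
  intros; apply He; auto.
Qed.

Lemma not_indep m F : ~ lin_indep m F ->
  exists c, (forall t, interval_11 t -> lin_comb m c F t = 0) /\ exists i, (i < m)%nat /\ c i <> 0.
Proof.
  intros Hn. apply NNPP. intro H. apply Hn. intros c Hc i Hi. apply NNPP. intro Hci.
  apply H. exists c. split; auto. exists i; auto.
Qed.

Lemma indep_bad_unique m G j D mu1 mu2 : (j < m)%nat -> lin_indep m G ->
  ~ lin_indep m (upd G j (fun t => G j t + mu1 * D t)) ->
  ~ lin_indep m (upd G j (fun t => G j t + mu2 * D t)) -> mu1 = mu2.
Proof.
  intros Hj HG H1 H2.
  destruct (not_indep _ _ H1) as [c [Hc [i [Hi Hci]]]].
  destruct (not_indep _ _ H2) as [d [Hd [k [Hk Hdk]]]].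
  assert (Ec : forall t, interval_11 t -> lin_comb m c G t + c j * (mu1 * D t) = 0).
  { intros t Ht. rewrite <- (Hc t Ht), lc_upd by auto. ring. }
  assert (Ed : forall t, interval_11 t -> lin_comb m d G t + d j * (mu2 * D t) = 0).
  { intros t Ht. rewrite <- (Hd t Ht), lc_upd by auto. ring. }
  assert (Hcj : c j <> 0).
  { intro E. apply Hci. apply (HG c); auto. intros t Ht. pose proof (Ec t Ht). rewrite E in H. lra. }
  assert (Hdj : d j <> 0).
  { intro E. apply Hdk. apply (HG d); auto. intros t Ht. pose proof (Ed t Ht). rewrite E in H. lra. }
  set (e := fun k => (d j * mu2) * c k + (- (c j * mu1)) * d k).
  assert (He : forall t, interval_11 t -> lin_comb m e G t = 0).
  { intros t Ht. unfold e. rewrite lc_lin_c. pose proof (Ec t Ht). pose proof (Ed t Ht).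
    assert (lin_comb m c G t = - (c j * (mu1 * D t))) by lra.
    assert (lin_comb m d G t = - (d j * (mu2 * D t))) by lra.
    rewrite H3, H4. ring. }
  pose proof (HG e He j Hj). unfold e in H.
  assert (c j * d j * (mu2 - mu1) = 0) by lra.
  apply Rmult_integral in H0. destruct H0 as [H0|H0].
  apply Rmult_integral in H0. destruct H0; [contradiction|contradiction]. lra.
Qed.


Lemma step m H j Y eps : (j < m)%nat -> in_G0n m H -> in_G0 Y ->
  lin_indep m (fun i => even_part (H i)) ->
  (forall a b, (a < m)%nat -> (b < m)%nat -> a <> b -> a <> j -> b <> j -> Q (H a) (H b) <> 0) ->
  (forall i, (i < m)%nat -> i <> j -> Q Y (H i) <> 0 \/ Q (H j) (H i) <> 0) ->
  0 < eps -> eps <= 1 ->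
  exists l, 0 < l < eps /\ GENplus m (upd H j (fun t => (1 - l) * Y t + l * H j t)).
Proof.
  intros Hj HH HY Hind HQ HQY Heps Heps1.
  set (comb := fun l t => (1 - l) * Y t + l * H j t).
  set (G := fun i => even_part (H i)).
  set (D := fun t => even_part Y t - G j t).
  assert (Eev : forall l i t, even_part (upd H j (comb l) i) t = upd G j (fun t => G j t + (1 - l) * D t) i t).
  { intros l i t. unfold upd. destruct (Nat.eqb i j); auto.
    unfold comb, D, G, even_part. field. }
  set (bad := fun i l => if Nat.eqb i m then ~ lin_indep m (fun k => even_part (upd H j (comb l) k))
                         else (i <> j /\ Q (comb l) (H i) = 0)).
  assert (HGj : in_G (H j)) by (apply HH; auto).
  assert (HYG : in_G Y) by (apply HY).
  assert (EQ : forall l i, (i < m)%nat -> Q (comb l) (H i) = (1 - l) * Q Y (H i) + l * Q (H j) (H i)).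
  { intros l i Hi. unfold comb. apply Q_lin; auto. apply HH; auto. }
  assert (Hbad : forall i x y, (i < S m)%nat -> bad i x -> bad i y -> x = y).
  { intros i x y Hi Bx By. unfold bad in Bx, By. destruct (Nat.eqb_spec i m).
    - assert (forall l, ~ lin_indep m (fun k => even_part (upd H j (comb l) k)) ->
                ~ lin_indep m (upd G j (fun t => G j t + (1 - l) * D t))).
      { intros l Hn Hi'. apply Hn. apply (indep_ext _ _ _ Hi'). intros; symmetry; apply Eev. }
      pose proof (indep_bad_unique m G j D (1 - x) (1 - y) Hj Hind (H0 x Bx) (H0 y By)). lra.
    - destruct Bx as [Hij Bx]. destruct By as [_ By].
      rewrite EQ in Bx, By by lia.
      apply (affine_unique (Q Y (H i)) (Q (H j) (H i))); auto. apply HQY; lia. }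
  destruct (avoid (S m) bad Hbad eps Heps) as [l [Hl Hgood]].
  exists l. split; auto.
  assert (Hc : in_G0 (comb l)) by (apply G0_convex; [exact HY | apply HH; exact Hj | lra]).
  assert (HH' : in_G0n m (upd H j (comb l))).
  { intros i Hi. unfold upd. destruct (Nat.eqb i j); auto. }
  split; [exact HH'|split].
  - pose proof (Hgood m ltac:(lia)). unfold bad in H0. rewrite Nat.eqb_refl in H0. now apply NNPP.
  - intros a b Ha Hb Hab. unfold upd.
    destruct (Nat.eqb_spec a j); destruct (Nat.eqb_spec b j).
    + subst; contradiction.
    + pose proof (Hgood b ltac:(lia)). unfold bad in H0. destruct (Nat.eqb_spec b m). lia.
      intro E. apply H0. split; auto.
    + pose proof (Hgood a ltac:(lia)). unfold bad in H0. destruct (Nat.eqb_spec a m). lia.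
      change (Q (H a) (comb l) <> 0). rewrite (Q_antisym (comb l) (H a)) by (try apply Hc; apply HH; auto).
      intro E. apply H0. split; auto. lra.
    + apply HQ; auto.
Qed.

Lemma density n P F eps : GENplus n P -> in_G0n n F -> 0 < eps ->
  exists H, GENplus n H /\ ball_n n eps F H.
Proof.
  intros HP HF Heps.
  assert (Claim : forall k, (k <= n)%nat -> exists H, GENplus n H /\
     forall i t, (i < k)%nat -> interval_11 t -> Rabs (H i t - F i t) <= eps / 2).
  { induction k; intros Hk.
    - exists P. split; auto. intros; lia.
    - destruct (IHk ltac:(lia)) as [H [HG Hcl]].
      destruct HG as [HH [Hind HQ]].
      destruct (step n H k (F k) (Rmin 1 (eps / 4)) ltac:(lia) HH (HF k ltac:(lia)) Hind)
        as [l [Hl HG']].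
      + intros a b Ha Hb Hab _ _. apply HQ; auto.
      + intros i Hi Hik. right. apply HQ; auto.
      + apply Rmin_glb_lt; lra.
      + apply Rmin_l.
      + exists (upd H k (fun t => (1 - l) * F k t + l * H k t)). split; auto.
        intros i t Hi Ht. unfold upd. destruct (Nat.eqb_spec i k).
        * subst i. replace ((1 - l) * F k t + l * H k t - F k t) with (l * (H k t - F k t)) by ring.
          rewrite Rabs_mult, Rabs_pos_eq by lra.
          pose proof (G_range (H k) t (proj1 (HH k ltac:(lia))) Ht).
          pose proof (G_range (F k) t (proj1 (HF k ltac:(lia))) Ht).
          assert (Rabs (H k t - F k t) <= 2) by (unfold interval_11 in *; apply Rabs_le; lra).
          assert (l <= eps / 4) by (pose proof (Rmin_r 1 (eps/4)); lra).
          nra.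
        * apply Hcl; auto. lia. }
  destruct (Claim n ltac:(lia)) as [H [HG Hcl]].
  exists H. split; auto. intros i Hi. exists (eps / 2). split. lra.
  intros t Ht. rewrite Rabs_minus_sym. apply Hcl; auto.
Qed.


Definition T (w x : R) : R := Rmax 0 (1 - Rabs x / w).

Lemma T_range w x : 0 < w -> 0 <= T w x <= 1.
Proof.
  intros Hw. unfold T. pose proof (Rabs_pos x).
  assert (0 <= Rabs x / w) by (apply Rdiv_le_0_compat; lra).
  unfold Rmax; destruct Rle_dec; lra.
Qed.

Lemma T_out w x : 0 < w -> w <= Rabs x -> T w x = 0.
Proof.
  intros Hw Hx. unfold T. assert (1 <= Rabs x / w).
  { apply Rmult_le_reg_r with w; auto. unfold Rdiv. rewrite Rmult_assoc, Rinv_l by lra. lra. }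
  unfold Rmax; destruct Rle_dec; lra.
Qed.

Lemma T_zero w : 0 < w -> T w 0 = 1.
Proof. intros Hw. unfold T. rewrite Rabs_R0. unfold Rdiv. rewrite Rmult_0_l. unfold Rmax; destruct Rle_dec; lra. Qed.

Lemma T_even w x : T w (- x) = T w x.
Proof. unfold T. rewrite Rabs_Ropp. auto. Qed.

Lemma T_lip w x y : 0 < w -> Rabs (T w x - T w y) <= Rabs (x - y) / w.
Proof.
  intros Hw. unfold T.
  assert (A : Rabs (Rabs x / w - Rabs y / w) <= Rabs (x - y) / w).
  { replace (Rabs x / w - Rabs y / w) with ((Rabs x - Rabs y) / w) by (field; lra).
    unfold Rdiv. rewrite Rabs_mult, Rabs_inv, (Rabs_pos_eq w) by lra.
    apply Rmult_le_compat_r. left; apply Rinv_0_lt_compat; lra. apply Rabs_triang_inv2. }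
  revert A. generalize (Rabs x / w) (Rabs y / w). intros u v A.
  unfold Rmax; repeat destruct Rle_dec; unfold Rabs in *; repeat destruct Rcase_abs; lra.
Qed.

Lemma T_cont w x : 0 < w -> continuity_pt (T w) x.
Proof.
  intros Hw eps Heps. exists (eps * w). split. apply Rmult_lt_0_compat; lra.
  intros y [_ Hy]. simpl in *. unfold R_dist in *.
  eapply Rle_lt_trans. apply T_lip; auto.
  apply Rmult_lt_reg_r with w; auto. unfold Rdiv. rewrite Rmult_assoc, Rinv_l by lra. lra.
Qed.

Lemma exT w a b c : 0 < w -> ex_RInt (fun t => T w (t - c)) a b.
Proof.
  intros Hw. apply (ex_RInt_continuous (V:=R_CompleteNormedModule)). intros z _.
  apply continuity_pt_filterlim.
  apply (continuity_pt_comp (fun t => t - c) (T w)).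
  apply continuity_pt_minus. apply continuity_pt_id. apply continuity_pt_const. intros u v; auto.
  apply T_cont; auto.
Qed.

Lemma exT0 w a b : 0 < w -> ex_RInt (T w) a b.
Proof.
  intros Hw. apply (ex_RInt_ext (fun t => T w (t - 0))). intros; rewrite Rminus_0_r; auto.
  apply exT; auto.
Qed.

Lemma RInt_zero_ext f a b : a <= b -> (forall x, a < x < b -> f x = 0) -> RInt f a b = 0.
Proof.
  intros Hab H. transitivity (RInt (fun _ => 0) a b).
  apply RInt_ext. intros x Hx. apply H. unfold Rmin, Rmax in Hx; destruct Rle_dec; lra.
  rewrite RInt_constR. lra.
Qed.

Lemma RInt_T_shift w a : 0 < w -> w <= a -> a + w <= 1 ->
  RInt (fun t => T w (t - a)) (-1) 1 = RInt (T w) (-1) 1.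
Proof.
  intros Hw Hwa Haw.
  assert (E : RInt (fun t => T w (t - a)) (-1) 1 = RInt (T w) (-1 - a) (1 - a)).
  { assert (H := RInt_comp_lin (V:=R_CompleteNormedModule) (T w) 1 (- a) (-1) 1).
    replace (1 * -1 + - a) with (-1 - a) in H by ring. replace (1 * 1 + - a) with (1 - a) in H by ring.
    rewrite <- H by (apply exT0; auto). apply RInt_ext. intros x _.
    change (T w (x - a) = 1 * T w (1 * x + - a)). rewrite Rmult_1_l. f_equal. ring. }
  rewrite E.
  rewrite <- (RInt_Chasles (V:=R_CompleteNormedModule) (T w) (-1 - a) (-1) (1 - a)) by (apply exT0; auto).
  rewrite <- (RInt_Chasles (V:=R_CompleteNormedModule) (T w) (-1) (1 - a) 1) by (apply exT0; auto).
  rewrite (RInt_zero_ext (T w) (-1 - a) (-1)). rewrite (RInt_zero_ext (T w) (1 - a) 1).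
  change (0 + RInt (T w) (-1) (1 - a) = RInt (T w) (-1) (1 - a) + 0). ring.
  lra. intros x Hx. apply T_out; auto. rewrite Rabs_pos_eq; lra.
  lra. intros x Hx. apply T_out; auto. rewrite Rabs_left; lra.
Qed.

Lemma RInt_id a b : RInt (fun t => t) a b = (b * b - a * a) / 2.
Proof.
  apply is_RInt_unique.
  assert (H := is_RInt_derive (V:=R_CompleteNormedModule) (fun t => t * t / 2) (fun t => t) a b).
  replace ((b * b - a * a) / 2) with (minus (b * b / 2) (a * a / 2)).
  apply H. intros x _. auto_derive; auto. field.
  intros x _. apply continuity_pt_filterlim. apply continuity_pt_id.
  unfold minus, plus, opp; simpl. field.
Qed.

Lemma Rabs_le_inv' u v : Rabs u <= v -> - v <= u <= v.
Proof. unfold Rabs; destruct Rcase_abs; lra. Qed.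

Definition Rf (a w s t : R) : R := t + s * (T w t - T w (t - a)).

Lemma Rf_G0 a w s : 0 < w -> w <= a -> a + w <= 1 -> 0 < s -> 4 * s <= w -> in_G0 (Rf a w s).
Proof.
  intros Hw Hwa Haw Hs Hsw.
  assert (Lip : forall x y, Rabs ((T w x - T w (x - a)) - (T w y - T w (y - a))) <= 2 * Rabs (x - y) / w).
  { intros x y. replace ((T w x - T w (x - a)) - (T w y - T w (y - a))) with
      ((T w x - T w y) - (T w (x - a) - T w (y - a))) by ring.
    eapply Rle_trans. apply Rabs_sub_le. pose proof (T_lip w x y Hw). pose proof (T_lip w (x - a) (y - a) Hw).
    replace (x - a - (y - a)) with (x - y) in H0 by ring. unfold Rdiv in *. lra. }
  assert (Hsw' : s * (2 / w) <= 1/2).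
  { apply Rmult_le_reg_r with w; auto. unfold Rdiv. field_simplify; lra. }
  split; [split; [|split; [|split]]|].
  - intros x y Hx Hy Hxy. unfold Rf.
    pose proof (Lip y x). rewrite Rabs_pos_eq with (x := y - x) in H by lra.
    apply Rabs_le_inv' in H.
    assert (s * ((T w y - T w (y - a)) - (T w x - T w (x - a))) >= - (s * (2 * (y - x) / w))).
    { apply Rle_ge. assert (s * (- (2 * (y - x) / w)) <= s * ((T w y - T w (y - a)) - (T w x - T w (x - a)))) by (apply Rmult_le_compat_l; lra). lra. }
    assert (s * (2 * (y - x) / w) <= (y - x) / 2).
    { replace (s * (2 * (y - x) / w)) with ((s * (2 / w)) * (y - x)) by (field; lra).
      apply Rle_trans with (1/2 * (y - x)). apply Rmult_le_compat_r; lra. lra. }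
    lra.
  - intros x Hx eps Heps. exists (eps / 2). split. lra. intros y Hy Hyx. unfold Rf.
    replace (y + s * (T w y - T w (y - a)) - (x + s * (T w x - T w (x - a)))) with
      ((y - x) + s * ((T w y - T w (y - a)) - (T w x - T w (x - a)))) by ring.
    eapply Rle_lt_trans. apply Rabs_triang. rewrite Rabs_mult, (Rabs_pos_eq s) by lra.
    pose proof (Lip y x).
    assert (s * Rabs (T w y - T w (y - a) - (T w x - T w (x - a))) <= s * (2 * Rabs (y - x) / w)) by (apply Rmult_le_compat_l; lra).
    assert (s * (2 * Rabs (y - x) / w) <= Rabs (y - x) / 2).
    { replace (s * (2 * Rabs (y - x) / w)) with ((s * (2 / w)) * Rabs (y - x)) by (field; lra).
      pose proof (Rabs_pos (y - x)).
      apply Rle_trans with (1/2 * Rabs (y - x)). apply Rmult_le_compat_r; lra. lra. }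
    lra.
  - unfold Rf. rewrite !T_out; auto; [ring| |]; rewrite Rabs_left; lra.
  - unfold Rf. rewrite !T_out; auto; [ring| |]; rewrite Rabs_pos_eq; lra.
  - unfold Rf.
    assert (E0 : ex_RInt (T w) (-1) 1) by (apply exT0; exact Hw).
    assert (E0' : ex_RInt (fun t => T w (t - a)) (-1) 1) by (apply exT; exact Hw).
    assert (E1 : ex_RInt (fun t => T w t - T w (t - a)) (-1) 1).
    { apply (ex_RInt_minusR (T w) (fun t => T w (t - a))); assumption. }
    assert (Eid : ex_RInt (fun t => t) (-1) 1).
    { apply (ex_RInt_continuous (V:=R_CompleteNormedModule)). intros z _.
      apply continuity_pt_filterlim, continuity_pt_id. }
    rewrite (RInt_plusR (fun t => t) (fun t => s * (T w t - T w (t - a)))); [| exact Eid | apply ex_RInt_scalR; exact E1].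
    rewrite (RInt_scalR (fun t => T w t - T w (t - a))) by exact E1.
    rewrite (RInt_minusR (T w) (fun t => T w (t - a))) by assumption.
    rewrite RInt_id, (RInt_T_shift w a) by assumption.
    replace ((1 * 1 - -1 * -1) / 2) with 0 by field. rewrite Rminus_diag, Rmult_0_r. apply Rplus_0_r.
Qed.

Lemma Rf_even a w s t : even_part (Rf a w s) t = s * (T w t - (T w (t - a) + T w (t + a)) / 2).
Proof.
  unfold even_part, Rf. rewrite T_even.
  replace (- t - a) with (- (t + a)) by ring. rewrite T_even. field.
Qed.


Lemma lc_scal m s c F t : lin_comb m (fun k => s * c k) F t = s * lin_comb m c F t.
Proof. induction m; simpl. ring. rewrite IHm. ring. Qed.

Lemma lc_diff_pts m c F t u :
  lin_comb m c F t - lin_comb m c F u = lin_comb m c (fun j _ => F j t - F j u) 0.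
Proof. induction m; simpl. ring. rewrite <- IHm. ring. Qed.

Lemma common_delta n (g : nat -> R -> R) x eta :
  (forall j, (j < n)%nat -> exists d, 0 < d /\ forall y, interval_11 y -> Rabs (y - x) < d ->
     Rabs (g j y - g j x) < eta) ->
  exists d, 0 < d /\ forall j y, (j < n)%nat -> interval_11 y -> Rabs (y - x) < d ->
     Rabs (g j y - g j x) < eta.
Proof.
  induction n; intros H.
  - exists 1. split. lra. intros; lia.
  - destruct IHn as [d1 [Hd1 Hd1']]; [intros; apply H; lia|].
    destruct (H n ltac:(lia)) as [d2 [Hd2 Hd2']].
    exists (Rmin d1 d2). split. apply Rmin_glb_lt; auto.
    intros j y Hj Hy Hyx. destruct (Nat.eq_dec j n) as [->|Hne].
    + apply Hd2'; auto. eapply Rlt_le_trans; [exact Hyx| apply Rmin_r].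
    + apply Hd1'; auto. lia. eapply Rlt_le_trans; [exact Hyx| apply Rmin_l].
Qed.

Lemma L5 n P : in_G0n n P -> lin_indep n (fun i => even_part (P i)) ->
  exists R, in_G0 R /\ lin_indep (S n) (fun i => even_part (upd P n R i)).
Proof.
  intros HP Hind.
  set (g := fun i => even_part (P i)).
  destruct (QI_exists n g 1) as [K [HK HQ]].
  { intros j t Hj Ht. apply even_bound; auto. apply HP; auto. }
  { exact Hind. }
  set (eta := 1 / (4 * (K + 1))).
  assert (Heta : 0 < eta) by (unfold eta; apply Rdiv_lt_0_compat; lra).
  destruct (common_delta n g (1/2) eta) as [d [Hd Hd']].
  { intros j Hj. destruct (HP j Hj) as [[_ [Hc _]] _].
    destruct (Hc (1/2) ltac:(unfold interval_11; lra) eta Heta) as [d1 [Hd1 Hd1']].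
    destruct (Hc (-(1/2)) ltac:(unfold interval_11; lra) eta Heta) as [d2 [Hd2 Hd2']].
    exists (Rmin d1 d2). split. apply Rmin_glb_lt; auto.
    intros y Hy Hyx.
    assert (A1 := Hd1' y Hy (Rlt_le_trans _ _ _ Hyx (Rmin_l _ _))).
    assert (A2 := Hd2' (-y) (I_opp y Hy)).
    replace (- y - - (1/2)) with (- (y - 1/2)) in A2 by ring. rewrite Rabs_Ropp in A2.
    specialize (A2 (Rlt_le_trans _ _ _ Hyx (Rmin_r _ _))).
    unfold g, even_part.
    replace ((P j y + P j (- y)) / 2 - (P j (1 / 2) + P j (- (1 / 2))) / 2) with
      ((P j y - P j (1/2)) / 2 + (P j (-y) - P j (-(1/2))) / 2) by field.
    eapply Rle_lt_trans. apply Rabs_triang. unfold Rdiv. rewrite !Rabs_mult.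
    rewrite Rabs_inv, (Rabs_pos_eq 2) by lra. lra. }
  set (d0 := Rmin d (1/4)).
  assert (Hd0 : 0 < d0) by (apply Rmin_glb_lt; lra).
  assert (Hd0' : d0 <= 1/4) by apply Rmin_r.
  assert (Hd0d : d0 <= d) by apply Rmin_l.
  set (w := d0 / 4). set (s := w / 4).
  assert (Hw : 0 < w) by (unfold w; lra). assert (Hs : 0 < s) by (unfold s; lra).
  set (R := Rf (1/2) w s).
  exists R. split.
  { apply Rf_G0; unfold s, w in *; lra. }
  set (Re := even_part R).
  assert (Re_half : Re (1/2) = - s / 2).
  { unfold Re, R. rewrite Rf_even. rewrite (T_out w (1/2)), (T_out w (1/2 + 1/2)) by
      (auto; rewrite Rabs_pos_eq; unfold w; lra).
    replace (1/2 - 1/2) with 0 by ring. rewrite T_zero by auto. field. }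
  set (x' := 1/2 + d0 / 2).
  assert (Hx' : interval_11 x') by (unfold x', interval_11; lra).
  assert (Re_x : Re x' = 0).
  { unfold Re, R. rewrite Rf_even. unfold x'.
    rewrite (T_out w (1/2 + d0/2)), (T_out w (1/2 + d0/2 - 1/2)), (T_out w (1/2 + d0/2 + 1/2));
      auto; try (rewrite Rabs_pos_eq; unfold w; lra). field. }
  assert (Re_b : forall t, Rabs (Re t) <= s).
  { intros t. unfold Re, R. rewrite Rf_even.
    pose proof (T_range w t Hw). pose proof (T_range w (t - 1/2) Hw). pose proof (T_range w (t + 1/2) Hw).
    rewrite Rabs_mult, (Rabs_pos_eq s) by lra.
    assert (Rabs (T w t - (T w (t - 1 / 2) + T w (t + 1 / 2)) / 2) <= 1) by (apply Rabs_le; lra).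
    nra. }
  intros c Hc i Hi.
  assert (Hc' : forall t, interval_11 t -> lin_comb n c g t + c n * Re t = 0).
  { intros t Ht. rewrite <- (Hc t Ht). simpl. unfold upd at 2. rewrite Nat.eqb_refl.
    f_equal. apply lc_ext; auto. intros j Hj. unfold upd, g. destruct (Nat.eqb_spec j n). lia. auto. }
  destruct (Req_dec (c n) 0) as [Hcn|Hcn].
  - assert (Hz : forall k, (k < n)%nat -> c k = 0).
    { apply Hind. intros t Ht. pose proof (Hc' t Ht). rewrite Hcn in H. fold g. lra. }
    destruct (Nat.eq_dec i n) as [->|Hne]; auto. apply Hz; lia.
  - exfalso.
    set (a := fun k => (- / c n) * c k).
    assert (Ha : forall t, interval_11 t -> lin_comb n a g t = Re t).
    { intros t Ht. unfold a. rewrite lc_scal. pose proof (Hc' t Ht).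
      assert (lin_comb n c g t = - (c n * Re t)) by lra. rewrite H0. field. auto. }
    assert (HS : sumabs n a <= K * s).
    { apply HQ. intros t Ht. rewrite Ha; auto. }
    assert (Hdiff : Rabs (Re x' - Re (1/2)) <= sumabs n a * eta).
    { rewrite <- Ha, <- Ha by (auto; unfold interval_11; lra). rewrite lc_diff_pts.
      apply lc_bound. intros j Hj. left. apply Hd'; auto. unfold x'.
      replace (1/2 + d0/2 - 1/2) with (d0/2) by ring. rewrite Rabs_pos_eq; lra. }
    rewrite Re_x, Re_half in Hdiff.
    replace (0 - - s / 2) with (s / 2) in Hdiff by field. rewrite Rabs_pos_eq in Hdiff by lra.
    assert (sumabs n a * eta <= K * s * eta) by (apply Rmult_le_compat_r; lra).
    assert (K * eta <= 1/4).
    { unfold eta. apply Rmult_le_reg_r with (4 * (K + 1)). lra.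
      unfold Rdiv. rewrite Rmult_assoc, (Rmult_assoc 1), Rinv_l by lra. nra. }
    nra.
Qed.

Lemma base_step n P : (2 <= n)%nat -> GENplus n P -> exists P', GENplus (S n) P'.
Proof.
  intros Hn [HP [Hind HQ]].
  destruct (L5 n P HP Hind) as [R [HR HRind]].
  set (X := fun mu t => (1 - mu) * P O t + mu * P 1%nat t).
  assert (HP0 : in_G0 (P O)) by (apply HP; lia).
  assert (HP1 : in_G0 (P 1%nat)) by (apply HP; lia).
  destruct (avoid n (fun i mu => Q (X mu) (P i) = 0)) with (eps := 1) as [mu [Hmu Hgood]].
  { intros i x y Hi Bx By. unfold X in Bx, By.
    rewrite Q_lin in Bx, By; try apply HP0; try apply HP1; try (apply HP; auto).
    apply (affine_unique (Q (P O) (P i)) (Q (P 1%nat) (P i))); auto.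
    destruct (Nat.eq_dec i O) as [->|Hi0].
    - right. apply HQ; lia.
    - left. apply HQ; lia. }
  { lra. }
  assert (HX : in_G0 (X mu)) by (apply G0_convex; auto; lra).
  destruct (step (S n) (upd P n R) n (X mu) 1) as [l [Hl HG]].
  - lia.
  - intros i Hi. unfold upd. destruct (Nat.eqb_spec i n); auto. apply HP; lia.
  - exact HX.
  - exact HRind.
  - intros a b Ha Hb Hab Han Hbn. unfold upd.
    destruct (Nat.eqb_spec a n). lia. destruct (Nat.eqb_spec b n). lia. apply HQ; auto; lia.
  - intros i Hi Hin. left. unfold upd. destruct (Nat.eqb_spec i n). lia. apply Hgood. lia.
  - lra.
  - lra.
  - eexists; exact HG.
Qed.


Ltac req := match goal with |- ?x = ?y => change (@eq R x y) end.

Lemma trap f g a b : in_G f -> in_G g -> interval_11 a -> interval_11 b -> a < b ->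
  (exists al be, forall s, a <= s <= b -> f s = al + be * s) ->
  (exists ga de, forall s, a <= s <= b -> g s = ga + de * s) ->
  RInt (fun t => f (ginv g t)) (g a) (g b) = (g b - g a) * (f a + f b) / 2.
Proof.
  intros Hf Hg Ha Hb Hab [al [be Hfa]] [ga [de Hga]].
  assert (Hgab0 : g a < g b) by (apply Hg; auto).
  pose proof Hgab0 as Hgab.
  rewrite (Hga a), (Hga b) in Hgab by lra.
  assert (Hde : 0 < de). { apply Rmult_lt_reg_r with (b - a). lra. rewrite Rmult_0_l. replace (de * (b - a)) with (ga + de * b - (ga + de * a)) by ring. lra. }
  transitivity (RInt (fun t => (al - be * ga / de) + (be / de) * t) (g a) (g b)).
  - apply RInt_ext. intros t Ht. rewrite Rmin_left, Rmax_right in Ht by lra.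
    set (s := (t - ga) / de).
    rewrite (Hga a), (Hga b) in Ht by lra.
    assert (Hs : a < s < b).
    { unfold s. split; apply Rmult_lt_reg_r with de; auto; unfold Rdiv;
      rewrite Rmult_assoc, Rinv_l by lra; lra. }
    assert (Hgs : g s = t) by (rewrite Hga by lra; unfold s; field; lra).
    rewrite <- Hgs, ginv_g; auto.
    2: { unfold interval_11 in *; lra. }
    rewrite Hfa by lra. rewrite (Hga s) by lra. change (@eq R (al + be * s) (al - be * ga / de + be / de * (ga + de * s))). field. lra.
  - rewrite RInt_plusR.
    2: apply ex_RInt_constR.
    2: { apply ex_RInt_scalR. apply (ex_RInt_continuous (V:=R_CompleteNormedModule)). intros z _.
         apply continuity_pt_filterlim, continuity_pt_id. }
    rewrite RInt_constR.
    rewrite RInt_scalR.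
    2: { apply (ex_RInt_continuous (V:=R_CompleteNormedModule)). intros z _.
         apply continuity_pt_filterlim, continuity_pt_id. }
    rewrite RInt_id. rewrite (Hga a), (Hga b), (Hfa a), (Hfa b) by lra. req. field. lra.
Qed.

Lemma T_aff w l r : 0 < w -> l <= r ->
  (r <= - w \/ (- w <= l /\ r <= 0) \/ (0 <= l /\ r <= w) \/ w <= l) ->
  exists al be, forall x, l <= x <= r -> T w x = al + be * x.
Proof.
  intros Hw Hlr [H|[H|[H|H]]].
  - exists 0, 0. intros x Hx. rewrite T_out; auto. ring. rewrite Rabs_left; lra.
  - exists 1, (1 / w). intros x Hx. unfold T. rewrite Rabs_left1 by lra.
    assert (0 <= 1 - - x / w).
    { assert (- x / w <= 1). { apply Rmult_le_reg_r with w; auto. unfold Rdiv. rewrite Rmult_assoc, Rinv_l by lra. lra. } lra. }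
    rewrite Rmax_right by lra. field. lra.
  - exists 1, (- (1 / w)). intros x Hx. unfold T. rewrite Rabs_pos_eq by lra.
    assert (0 <= 1 - x / w).
    { assert (x / w <= 1). { apply Rmult_le_reg_r with w; auto. unfold Rdiv. rewrite Rmult_assoc, Rinv_l by lra. lra. } lra. }
    rewrite Rmax_right by lra. field. lra.
  - exists 0, 0. intros x Hx. rewrite T_out; auto. ring. rewrite Rabs_pos_eq; lra.
Qed.

Lemma Rf_aff a w s l r :
  (exists al be, forall x, l <= x <= r -> T w x = al + be * x) ->
  (exists al be, forall x, l - a <= x <= r - a -> T w x = al + be * x) ->
  exists al be, forall x, l <= x <= r -> Rf a w s x = al + be * x.
Proof.
  intros [a1 [b1 H1]] [a2 [b2 H2]].
  exists (s * (a1 - a2 + b2 * a)), (1 + s * (b1 - b2)). intros x Hx. unfold Rf.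
  rewrite H1, H2 by lra. ring.
Qed.

Ltac Taff := apply T_aff; [lra|lra|first [left; lra | right; left; lra | right; right; left; lra | right; right; right; lra]].

Lemma div13 x : x / (1/3) = 3 * x.
Proof. field. Qed.

Ltac Teval := unfold Rf, T; rewrite ?div13;
  unfold Rabs; repeat destruct Rcase_abs; unfold Rmax; repeat destruct Rle_dec; lra.

Definition P0 := Rf (2/3) (1/3) (1/12).
Definition P1' := Rf (1/3) (1/3) (1/12).

Lemma P0_G0 : in_G0 P0. Proof. apply Rf_G0; lra. Qed.
Lemma P1_G0 : in_G0 P1'. Proof. apply Rf_G0; lra. Qed.

Definition node (k : nat) : R :=
  match k with O => -1 | 1%nat => -1/3 | 2%nat => 0 | 3%nat => 1/3 | 4%nat => 2/3 | _ => 1 end.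

Lemma Q_P0P1 : Q P0 P1' = - (1/144).
Proof.
  pose proof P0_G0 as [HG0 _]. pose proof P1_G0 as [HG1 _].
  set (p := fun k => P1' (node k)).
  assert (Hn : forall k, interval_11 (node k)).
  { intros k. unfold interval_11. destruct k as [|[|[|[|[|k]]]]]; simpl; lra. }
  assert (Hp : forall k, (k <= 5)%nat -> interval_11 (p k)).
  { intros k _. unfold p. apply G_range; auto. }
  assert (p0 : p O = -1) by (unfold p, P1'; simpl; Teval).
  assert (p5 : p 5%nat = 1) by (unfold p, P1'; simpl; Teval).
  unfold Q. rewrite <- p0, <- p5.
  rewrite (RInt_part _ p 5 Hp) by (intros; apply exQ; auto).
  rewrite (sumk_ext 5 _ (fun k => (p (S k) - p k) * (P0 (node k) + P0 (node (S k))) / 2)).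
  2: { intros k Hk. unfold p. apply trap; auto.
       - destruct k as [|[|[|[|[|k]]]]]; simpl; try lra; lia.
       - unfold P0. destruct k as [|[|[|[|[|k]]]]]; simpl; try lia; apply Rf_aff; Taff.
       - unfold P1'. destruct k as [|[|[|[|[|k]]]]]; simpl; try lia; apply Rf_aff; Taff. }
  unfold p. simpl.
  unfold P0, P1'.
  assert (A1 : Rf (2/3) (1/3) (1/12) (-1) = -1) by Teval.
  assert (A2 : Rf (2/3) (1/3) (1/12) (-1/3) = -1/3) by Teval.
  assert (A3 : Rf (2/3) (1/3) (1/12) 0 = 1/12) by Teval.
  assert (A4 : Rf (2/3) (1/3) (1/12) (1/3) = 1/3) by Teval.
  assert (A5 : Rf (2/3) (1/3) (1/12) (2/3) = 2/3 - 1/12) by Teval.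
  assert (A6 : Rf (2/3) (1/3) (1/12) 1 = 1) by Teval.
  assert (B1 : Rf (1/3) (1/3) (1/12) (-1) = -1) by Teval.
  assert (B2 : Rf (1/3) (1/3) (1/12) (-1/3) = -1/3) by Teval.
  assert (B3 : Rf (1/3) (1/3) (1/12) 0 = 1/12) by Teval.
  assert (B4 : Rf (1/3) (1/3) (1/12) (1/3) = 1/3 - 1/12) by Teval.
  assert (B5 : Rf (1/3) (1/3) (1/12) (2/3) = 2/3) by Teval.
  assert (B6 : Rf (1/3) (1/3) (1/12) 1 = 1) by Teval.
  rewrite A1, A2, A3, A4, A5, A6, B1, B2, B3, B4, B5, B6. field.
Qed.


Definition Fam2 (i : nat) : R -> R := match i with O => P0 | _ => P1' end.

Lemma Fam2_G0 : in_G0n 2 Fam2.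
Proof. intros i Hi. destruct i as [|i]. apply P0_G0. apply P1_G0. Qed.

Lemma e0_13 : even_part P0 (1/3) = 0.
Proof. unfold P0. rewrite Rf_even. Teval. Qed.
Lemma e0_0 : even_part P0 0 = 1/12.
Proof. unfold P0. rewrite Rf_even. Teval. Qed.
Lemma e1_13 : even_part P1' (1/3) = - (1/24).
Proof. unfold P1'. rewrite Rf_even. Teval. Qed.
Lemma e1_0 : even_part P1' 0 = 1/12.
Proof. unfold P1'. rewrite Rf_even. Teval. Qed.

Lemma GENplus2 : GENplus 2 Fam2.
Proof.
  split; [apply Fam2_G0|split].
  - intros c Hc.
    assert (H1 := Hc (1/3) ltac:(unfold interval_11; lra)).
    assert (H2 := Hc 0 ltac:(unfold interval_11; lra)).
    simpl in H1, H2. rewrite e0_13, e1_13 in H1. rewrite e0_0, e1_0 in H2.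
    assert (c 1%nat = 0) by lra. assert (c O = 0) by lra.
    intros i Hi. destruct i as [|[|i]]; auto; lia.
  - pose proof P0_G0 as [HG0 _]. pose proof P1_G0 as [HG1 _].
    intros i j Hi Hj Hij. destruct i as [|[|i]]; destruct j as [|[|j]]; try lia; simpl.
    + rewrite Q_P0P1. lra.
    + rewrite (Q_antisym P0 P1') by auto. rewrite Q_P0P1. lra.
Qed.

Lemma GENplus1 : GENplus 1 Fam2.
Proof.
  split; [intros i Hi; apply Fam2_G0; lia|split].
  - intros c Hc.
    assert (H2 := Hc 0 ltac:(unfold interval_11; lra)).
    simpl in H2. rewrite e0_0 in H2.
    intros i Hi. destruct i as [|i]; [lra|lia].
  - intros i j Hi Hj Hij. lia.
Qed.

Lemma exists_base n : (1 <= n)%nat -> exists P, GENplus n P.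
Proof.
  intros Hn. destruct (Nat.eq_dec n 1) as [->|Hn1]. exists Fam2; apply GENplus1.
  assert (H2 : (2 <= n)%nat) by lia. clear Hn Hn1.
  induction n. lia.
  destruct (Nat.eq_dec n 1) as [->|Hn1]. exists Fam2; apply GENplus2.
  destruct IHn as [P HP]. lia. apply (base_step n P); auto. lia.
Qed.

Theorem proposition4p10 (n : nat) (hn : (0 < n)%nat) :
  (forall F, GENplus n F -> GEN n F) /\
  (dense_in_G0n n (GENplus n) /\ Gdelta_in_G0n n (GENplus n)) /\
  (dense_in_G0n n (GEN n) /\ Gdelta_in_G0n n (GEN n)).
Proof.
  destruct (exists_base n ltac:(lia)) as [P HP].
  split; [|split; split].
  - apply GENplus_GEN.
  - split. intros F [HF _]; auto.
    intros F eps HF Heps. apply (density n P F eps); auto.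
  - apply open_Gdelta, GENplus_open.
  - split. intros F [HF _]; auto.
    intros F eps HF Heps. destruct (density n P F eps HP HF Heps) as [H [HG Hb]].
    exists H. split; auto. apply GENplus_GEN; auto.
  - apply open_Gdelta, GEN_open.
Qed.
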